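(* Let $d\ge 2$ be an integer, let $C:=-2.15$ and let $g:\mathbb{R}\to\mathbb{R}$ be $$g(z):=\exp\big(z^3+(-2-3C)z^2+(3C^2+4C)z+\ln 2\big)-1 .$$ For $W=[w_1,\ldots,w_d]$ with $w_1,\ldots,w_d\in\mathbb{R}^d$, define $f(\cdot;W):\mathbb{R}^d\to\mathbb{R}^d$ by $f(x;W):=[g(\langle w_1,x\rangle),\ldots,g(\langle w_d,x\rangle)]^\top$. Then there exists such a $W$ for which $f(\cdot;W)$ has two distinct fixed points $p_1,p_2\in\mathbb{R}^d$ such that for each $i\in\{1,2\}$ there exist constants $\epsilon_i>0$, $c_i>0$ and $K_i\in[0,1)$ with the following property: for every initial point $x^{(0)}\in[p_{i,1}-\epsilon_i,p_{i,1}+\epsilon_i]\times\{1\}^{d-1}$, the fixed-point iteration $x^{(t)}=f(x^{(t-1)};W)$ ($t\ge1$) converges to $p_i$, and for every $t\ge2$, $$\|x^{(t)}-p_i\|_\infty\le K_i^t\cdot c_i\epsilon_i .$$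
   Context: $p_{i,1}$ denotes the first coordinate of $p_i$; $\|\cdot\|_\infty$ is the $\ell_\infty$ norm. A fixed point of $F$ is a point $p$ with $F(p)=p$. *)

(* Defs.v *)
From HB Require Import structures.
From mathcomp Require Import all_boot all_order all_algebra.
From mathcomp Require Import all_classical all_reals all_analysis.
From mathcomp Require Import Rstruct Rstruct_topology.
Set Implicit Arguments. Unset Strict Implicit. Unset Printing Implicit Defensive.
Import Order.TTheory GRing.Theory Num.Theory.
Local Open Scope classical_set_scope.
Local Open Scope ring_scope.

Definition RR : realType := Rdefinitions.R.

Definition Cst : RR := - (215%:R / 100%:R).

Definition g (z : RR) : RR :=
  expR (z ^+ 3 + (-2 - 3 * Cst) * z ^+ 2 + (3 * Cst ^+ 2 + 4 * Cst) * z + ln 2) - 1.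

(* vectors of R^d are functions 'I_d -> R; W i is the row w_{i+1} *)
Definition inner (d : nat) (w x : 'I_d -> RR) : RR := \sum_(j < d) w j * x j.

Definition fW (d : nat) (W : 'I_d -> 'I_d -> RR) (x : 'I_d -> RR) : 'I_d -> RR :=
  fun i => g (inner (W i) x).

Definition normInf (d : nat) (v : 'I_d -> RR) : RR := \big[Num.max/0]_(i < d) `|v i|.

Definition vsub (d : nat) (x y : 'I_d -> RR) : 'I_d -> RR := fun i => x i - y i.

Definition locally_linearly_attracting (d : nat) (W : 'I_d -> 'I_d -> RR)
    (p : 'I_d -> RR) : Prop :=
  exists (eps c K : RR), 0 < eps /\ 0 < c /\ 0 <= K /\ K < 1 /\
    forall x0 : 'I_d -> RR,
      (forall i : 'I_d, (val i = 0%N -> p i - eps <= x0 i <= p i + eps) /\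
                        (val i <> 0%N -> x0 i = 1)) ->
      ((fun t : nat => normInf (vsub (iter t (fW W) x0) p)) @ \oo --> (0 : RR)) /\
      (forall t : nat, (2 <= t)%N ->
          normInf (vsub (iter t (fW W) x0) p) <= K ^+ t * c * eps).

(* Main.v *)
Require Import Defs.
From HB Require Import structures.
From mathcomp Require Import all_boot all_order all_algebra.
From mathcomp Require Import all_classical all_reals all_analysis.
From mathcomp Require Import Rstruct Rstruct_topology.
From mathcomp Require Import lra ring.
Import Order.TTheory GRing.Theory Num.Theory.
Local Open Scope ring_scope.

Definition PP (u : RR) : RR :=
  u ^+ 3 + (-2 - 3 * Cst) * u ^+ 2 + (3 * Cst ^+ 2 + 4 * Cst) * u + ln 2.

Lemma gE u : g u = expR (PP u) - 1. Proof. by []. Qed.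

Definition u1 : RR := Cst.
Definition u2 : RR := Cst + 4%:R / 3%:R.
Definition z1 : RR := g u1.
Definition z2 : RR := g u2.
Definition aa : RR := (u1 - u2) / (z1 - z2).
Definition bb : RR := u1 - aa * z1.
Definition hh (z : RR) : RR := g (aa * z + bb).

Lemma Pdiff : PP u2 - PP u1 = - (32%:R / 27%:R).
Proof. rewrite /PP /u2 /u1. field. all: by rewrite ?pnatr_eq0. Qed.

Lemma z12 : z1 - z2 != 0.
Proof.
rewrite subr_eq0 /z1 /z2 !gE; apply/negP => /eqP H.
have : PP u1 = PP u2 by apply: exp.expR_inj; lra.
move=> E; have := Pdiff; rewrite E subrr => /eqP; lra.
Qed.

Lemma az1 : aa * z1 + bb = u1.
Proof. rewrite /bb; ring. Qed.

Lemma az2 : aa * z2 + bb = u2.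
Proof. rewrite /bb /aa; have := z12 => H. field. by []. Qed.

Lemma P1 t : PP (u1 + t) - PP u1 = t ^+ 2 * (t - 2).
Proof. rewrite /PP /u1; ring. Qed.

Lemma P2 t : PP (u2 + t) - PP u2 = t ^+ 2 * (t + 2).
Proof. rewrite /PP /u2; field. all: by rewrite ?pnatr_eq0. Qed.

Lemma expbound (y : RR) : `|y| <= 1 -> `|expR y - 1| <= expR 1 * `|y|.
Proof.
move=> Hy.
have e1 : 1 <= expR (1 : RR) by have := exp.expR_ge1Dx (1:RR); lra.
have H1 := exp.expR_ge1Dx y.
have H2 : expR y - 1 <= y * expR y.
  have := exp.expR_ge1Dx (-y); rewrite exp.expRN => H.
  have := ler_wpM2r (ltW (exp.expR_gt0 y)) H.
  rewrite mulVf ?gt_eqF ?exp.expR_gt0 //; lra.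
have Hle : expR y <= expR 1 by rewrite exp.ler_expR; move: Hy; rewrite ler_norml; lra.
have Hp := exp.expR_gt0 y.
case: (lerP 0 y) => hy.
  rewrite ger0_norm ?ger0_norm //; [nra | lra].
rewrite ler0_norm ?ltr0_norm //; [nra | nra].
Qed.
Lemma contract uk zk (hk : aa * zk + bb = uk) (hz : g uk = zk)
  (Hy : forall t : RR, `|t| <= 1 -> `|PP (uk + t) - PP uk| <= 3%:R * t ^+ 2) :
  exists eps : RR, 0 < eps /\ forall z, `|z - zk| <= eps -> `|hh z - zk| <= `|z - zk| / 2.
Proof.
set E := expR (PP uk); set L := expR (1 : RR).
have EP : 0 < E by apply: exp.expR_gt0.
have LP : 1 <= L by have := exp.expR_ge1Dx (1:RR); rewrite /L; lra.
set N := E * L * aa ^+ 2.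
have NP : 0 <= N.
  rewrite /N mulr_ge0 ?sqr_ge0 // mulr_ge0 //; lra.
set M := 3%:R * N + 1.
have MP : 1 <= M by rewrite /M; lra.
have AP : 0 <= `|aa| by [].
exists (6%:R * M * (`|aa| + 1))^-1.
have Q : 0 < 6%:R * M * (`|aa| + 1) by rewrite !mulr_gt0 //; lra.
split; first by rewrite invr_gt0.
set eps := _^-1 => z Hz.
have Heps : eps * (6%:R * M * (`|aa| + 1)) = 1 by rewrite mulVf ?gt_eqF.
have e0 : 0 <= eps by rewrite /eps invr_ge0 ltW.
set t := aa * (z - zk).
have ht : aa * z + bb = uk + t by rewrite /t -hk; ring.
set y := PP (uk + t) - PP uk.
have hd : hh z - zk = E * (expR y - 1).
  have ee : expR (PP (uk + t)) = E * expR y.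
    by rewrite /y /E -exp.expRD; congr expR; ring.
  rewrite /hh ht gE -hz gE ee -/E; ring.
have nz := normr_ge0 (z - zk).
have ae : `|aa| * eps <= 1 / 6%:R.
  have : (`|aa| + 1) * eps * (6%:R * M) = 1.
  { rewrite -[RHS]Heps. ring. }
  nra.
have Me : M * eps <= 1 / 6%:R.
  have : M * eps * (6%:R * (`|aa| + 1)) = 1.
  { rewrite -[RHS]Heps. ring. }
  nra.
have tle : `|t| <= 1 / 6%:R.
  rewrite /t normrM.
  have : `|aa| * `|z - zk| <= `|aa| * eps by apply: ler_wpM2l.
  lra.
have tn : 0 <= `|t| by [].
have t2e : t ^+ 2 = `|t| ^+ 2 by rewrite real_normK ?num_real.
have h16 : 1 / 6%:R <= (1:RR) by lra.
have yb := Hy t (le_trans tle h16); rewrite -/y in yb.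
have yle : `|y| <= 1.
  rewrite t2e in yb. nra.
have eb := expbound y yle.
rewrite hd normrM (gtr0_norm EP).
have t2 : t ^+ 2 = aa ^+ 2 * `|z - zk| ^+ 2.
  by rewrite /t exprMn real_normK ?num_real.
have s1 : E * `|expR y - 1| <= E * (L * (3%:R * t ^+ 2)).
  apply: ler_wpM2l; first lra.
  apply: (le_trans eb); apply: ler_wpM2l; [exact: ltW (exp.expR_gt0 _) | exact: yb].
apply: (le_trans s1).
have -> : E * (L * (3%:R * t ^+ 2)) = 3%:R * N * `|z - zk| * `|z - zk|.
  by rewrite t2 /N; ring.
have : 3%:R * N * `|z - zk| <= M * eps.
  have : N * `|z - zk| <= N * eps by apply: ler_wpM2l.
  rewrite /M. nra.
nra.
Qed.
Lemma Hy1 (t : RR) : `|t| <= 1 -> `|PP (u1 + t) - PP u1| <= 3%:R * t ^+ 2.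
Proof.
move=> ht; rewrite P1 normrM (ger0_norm (sqr_ge0 t)).
have : `|t - 2| <= 3%:R by rewrite ler_norml; move: ht; rewrite ler_norml; lra.
have := sqr_ge0 t; nra.
Qed.

Lemma Hy2 (t : RR) : `|t| <= 1 -> `|PP (u2 + t) - PP u2| <= 3%:R * t ^+ 2.
Proof.
move=> ht; rewrite P2 normrM (ger0_norm (sqr_ge0 t)).
have : `|t + 2| <= 3%:R by rewrite ler_norml; move: ht; rewrite ler_norml; lra.
have := sqr_ge0 t; nra.
Qed.

Lemma iter_bound zk (eps : RR) (H : forall z, `|z - zk| <= eps -> `|hh z - zk| <= `|z - zk| / 2)
  z : `|z - zk| <= eps -> forall t, `|iter t hh z - zk| <= (2^-1) ^+ t * eps.
Proof.
move=> Hz; elim=> [|t IH]; first by rewrite expr0 mul1r.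
rewrite iterS.
have e0 : 0 <= eps by apply: le_trans Hz.
have hp : (2^-1) ^+ t * eps <= eps.
  rewrite -[leRHS]mul1r; apply: ler_wpM2r => //; apply: exprn_ile1; lra.
apply: le_trans (H _ (le_trans IH hp)) _.
rewrite exprS; lra.
Qed.

Lemma g0 : g 0 = 1.
Proof.
rewrite /g.
have -> : (0:RR) ^+ 3 + (-2 - 3 * Cst) * 0 ^+ 2 + (3 * Cst ^+ 2 + 4 * Cst) * 0 + ln 2 = ln 2.
  by rewrite !expr0n /=; ring.
rewrite exp.lnK ?posrE; lra.
Qed.

Lemma normInf_le n (v : 'I_n -> RR) B : (forall i, `|v i| <= B) -> 0 <= B -> normInf v <= B.
Proof.
move=> H B0; rewrite /normInf; elim/big_ind: _ => // x y hx hy.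
by rewrite ge_max hx hy.
Qed.

Lemma normInf_ge0 n (v : 'I_n -> RR) : 0 <= normInf v.
Proof.
rewrite /normInf; elim/big_ind: _ => // x y hx hy.
by rewrite le_max hx.
Qed.
Section Main.
Variable n : nat.
Local Notation d := n.+2.

Definition WW : 'I_d -> 'I_d -> RR := fun i j =>
  if val i == 0%N then (if val j == 0%N then aa else if val j == 1%N then bb else 0) else 0.

Definition pp (zk : RR) : 'I_d -> RR := fun j => if val j == 0%N then zk else 1.

Lemma fW_shape (x : 'I_d -> RR) : (forall i : 'I_d, val i <> 0%N -> x i = 1) ->
  fW WW x = fun i => if val i == 0%N then hh (x ord0) else 1.
Proof.
move=> Hx; apply: funext => -[[|k] Hk]; rewrite /fW /inner /=.
  rewrite 2!big_ord_recl big1; last first.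
    by move=> j _; rewrite /WW /= mul0r.
  rewrite /WW /= (Hx (lift ord0 ord0)) //.
  by rewrite /hh mulr1 addr0.
by rewrite big1 ?g0 // => j _; rewrite /WW /= mul0r.
Qed.

Lemma iter_shape (x : 'I_d -> RR) : (forall i : 'I_d, val i <> 0%N -> x i = 1) ->
  forall t, iter t (fW WW) x = fun i => if val i == 0%N then iter t hh (x ord0) else 1.
Proof.
move=> Hx; elim=> [|t IH].
  apply: funext => i /=; case: eqP => i0; last by rewrite Hx.
  by congr x; apply: val_inj.
rewrite iterS IH fW_shape //; last by move=> i /eqP /negbTE ->.
Qed.

Lemma fixed zk uk (hk : aa * zk + bb = uk) (hz : g uk = zk) : fW WW (pp zk) = pp zk.
Proof.
rewrite fW_shape; last by move=> i /eqP /negbTE; rewrite /pp => ->.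
apply: funext => i; rewrite /pp /=; case: eqP => // _.
by rewrite /hh hk hz.
Qed.

Lemma attracting zk uk (hk : aa * zk + bb = uk) (hz : g uk = zk)
  (Hy : forall t : RR, `|t| <= 1 -> `|PP (uk + t) - PP uk| <= 3%:R * t ^+ 2) :
  locally_linearly_attracting WW (pp zk).
Proof.
have [eps [e0 He]] := contract uk zk hk hz Hy.
exists eps, 1, (2^-1); split=> //; split; first lra.
split; first lra. split; first lra.
move=> x0 Hx0.
have Hx : forall i : 'I_d, val i <> 0%N -> x0 i = 1 by move=> i /(proj2 (Hx0 i)).
have H0 : `|x0 ord0 - zk| <= eps.
  have := proj1 (Hx0 ord0) erefl; rewrite /pp /= => h.
  rewrite ler_distl; exact: h.
have B : forall t, normInf (vsub (iter t (fW WW) x0) (pp zk)) <= (2^-1) ^+ t * eps.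
  move=> t; apply: normInf_le; last first.
    by rewrite mulr_ge0 ?exprn_ge0 ?invr_ge0 //; lra.
  move=> i; rewrite iter_shape // /vsub /pp; case: eqP => _.
    exact: iter_bound.
  by rewrite subrr normr0 mulr_ge0 ?exprn_ge0 ?invr_ge0 //; lra.
split.
  apply: (@squeeze_cvgr _ _ _ _ (fun _ => 0) (fun t => geometric eps (2^-1) t)).
  - apply: nearW => t; rewrite normInf_ge0 /= /geometric mulrC; exact: B.
  - exact: cvg_cst.
  - apply: cvg_geometric; rewrite ger0_norm; lra.
move=> t _; rewrite mulr1; exact: B.
Qed.

End Main.

Theorem lemmaC7 (d : nat) (hd : (2 <= d)%N) :
  exists (W : 'I_d -> 'I_d -> RR) (p1 p2 : 'I_d -> RR),
    p1 <> p2 /\ fW W p1 = p1 /\ fW W p2 = p2 /\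
    locally_linearly_attracting W p1 /\ locally_linearly_attracting W p2.
Proof.
case: d hd => [|[|n]] // _.
exists (WW n), (pp n z1), (pp n z2).
have g1 : g u1 = z1 by [].
have g2 : g u2 = z2 by [].
split.
  move=> /(congr1 (fun f => f ord0)); rewrite /pp /= => /eqP.
  by rewrite -subr_eq0 (negbTE z12).
split; first exact: fixed az1 g1.
split; first exact: fixed az2 g2.
split; [exact: attracting az1 g1 Hy1 | exact: attracting az2 g2 Hy2].
Qed.
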